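(* Let $(\mathcal G,L,I)$ be a relational symplectic groupoid with $L_2$ as defined. Then $$\overline{I_{rel}}\circ L_2=\overline{L_2}\circ\overline{I_{rel}}\qquad\text{and}\qquad L_2^*=L_2.$$ Here $L_2^*$ is the transpose relation, and $\overline{L_2}$ is the same subset as $L_2$ regarded as a relation $\bar{\mathcal G}\nrightarrow\bar{\mathcal G}$. In set terms: $(x,y)\in L_2\iff(I(x),I(y))\in L_2$, and $(x,y)\in L_2\iff(y,x)\in L_2$.
   Context: Relations: for sets $A,B$, a relation $R:A\nrightarrow B$ is a subset $R\subset A\times B$. The composition of $R:A\nrightarrow B$ and $R':B\nrightarrow C$ is $R'\circ R=\{(a,c): \exists b,\ (a,b)\in R,\ (b,c)\in R'\}$. The transpose is $R^*=\{(b,a):(a,b)\in R\}$. Products $R_1\times R_2:A_1\times A_2\nrightarrow B_1\times B_2$ are taken componentwise. $*$ denotes a one-point set, and a relation $*\nrightarrow B$ is identified with a subset of $B$. For a (possibly infinite-dimensional, weak) symplectic manifold $\mathcal M$, $\bar{\mathcal M}$ denotes $\mathcal M$ with the negated symplectic form. An immersed canonical relation $\mathcal M\nrightarrow\mathcal N$ is an immersed Lagrangian submanifold of $\bar{\mathcal M}\times\mathcal N$. A relational symplectic groupoid is a triple $(\mathcal G,L,I)$ consisting of: - a weak symplectic manifold $\mathcal G$ (the induced map $T\mathcal G\to T^*\mathcal G$ is injective); - an immersed Lagrangian submanifold $L\subset\mathcal G^3$; - an antisymplectomorphism $I:\mathcal G\to\mathcal G$. Notation: - $L_{rel}:\mathcal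 G\times\mathcal G\nrightarrow\bar{\mathcal G}$ is the subset $\{((x,y),z):(x,y,z)\in L\}$. - $I_{rel}:\bar{\mathcal G}\nrightarrow\mathcal G$ is the graph $\{(x,I(x))\}$. - $\overline{L_{rel}}:\bar{\mathcal G}\times\bar{\mathcal G}\nrightarrow\mathcal G$ and $\overline{I_{rel}}:\mathcal G\nrightarrow\bar{\mathcal G}$ are the same subsets regarded between the sign-reversed manifolds. - $T_{rel}$ and $\overline{T_{rel}}$ denote the graph of the transposition $(x,y)\mapsto(y,x)$ on $\mathcal G\times\mathcal G$, respectively on $\bar{\mathcal G}\times\bar{\mathcal G}$. - $Id$ denotes the graph of the identity. - $L_I:*\nrightarrow\mathcal G\times\mathcal G$ is the subset $\{(x,I(x)):x\in\mathcal G\}$. - $L_3:=I_{rel}\circ L_{rel}:\mathcal G\times\mathcal G\nrightarrow\mathcal G$, i.e. $L_3=\{((x,y),I(z)):(x,y,z)\in L\}$. Axioms: - (A.1) $L$ is cyclically symmetric: $(x,y,z)\in L\Rightarrow(y,z,x)\in L$. - (A.2) $I^2=\mathrm{id}$. - (A.3) $I_{rel}\circ L_{rel}=\overline{L_{rel}}\circ\overline{T_{rel}}\circ(\overline{I_{rel}}\times\overline{I_{rel}})$. - (A.4) $L_3\circ(L_3\times Id)=L_3\circ(Id\times L_3)$, and this is an immersed Lagrangian submanifold (as a relation $\mathcal G^3\nrightarrow\mathcal G$). - (A.5) $L_1:=L_3\circ L_I$ is an immersed Lagrangian submanifold of $\mathcal G$. - (A.6) $L_3\circ(L_1\times L_1)=L_1$.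 - (A.7) $L_2:=L_3\circ(L_1\times Id)$ is an immersed Lagrangian submanifold of $\bar{\mathcal G}\times\mathcal G$. *)

(* Defs.v *)
(* plain set-theoretic relations, with the differential-geometric
   (symplectic / Lagrangian) conditions kept as abstract predicates. *)
Set Implicit Arguments.

Definition rel (A B : Type) := A -> B -> Prop.

Definition rel_eq {A B} (R S : rel A B) : Prop := forall a b, R a b <-> S a b.

(** Composition: [comp R' R] is R' o R (first R, then R'). *)
Definition comp {A B C} (R' : rel B C) (R : rel A B) : rel A C :=
  fun a c => exists b, R a b /\ R' b c.

Definition transpose {A B} (R : rel A B) : rel B A := fun b a => R a b.

Definition prod_rel {A1 A2 B1 B2} (R1 : rel A1 B1) (R2 : rel A2 B2)
  : rel (A1 * A2) (B1 * B2) :=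
  fun a b => R1 (fst a) (fst b) /\ R2 (snd a) (snd b).

Definition graph {A B} (f : A -> B) : rel A B := fun a b => b = f a.
Definition Id {A} : rel A A := graph (fun x : A => x).

Definition swap {A} (p : A * A) : A * A := (snd p, fst p).
Definition assoc {A} (p : (A * A) * A) : A * (A * A) :=
  (fst (fst p), (snd (fst p), snd p)).

(** Signs of symplectic forms do not affect the
    underlying sets, so only the set-level data matters for the conclusion. *)
Record SymplecticData (G : Type) := {
  weak_symplectic : Prop;
  imm_lag_G3      : (G * G * G -> Prop) -> Prop;
  imm_lag_rel31   : rel ((G * G) * G) G -> Prop;
  imm_lag_G       : (G -> Prop) -> Prop;
  imm_lag_rel11   : rel G G -> Prop;
  antisymplecto   : (G -> G) -> Prop
}.

Section RSG.
Context {G : Type} (L : G * G * G -> Prop) (I : G -> G).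

Definition L_rel : rel (G * G) G := fun p z => L (fst p, snd p, z).
Definition I_rel : rel G G := graph I.
Definition L3 : rel (G * G) G := comp I_rel L_rel.
Definition L_I : rel unit (G * G) := fun _ p => snd p = I (fst p).
Definition L1 : rel unit G := comp L3 L_I.
(** L_2 := L_3 o (L_1 x Id), with * x G identified with G. *)
Definition L2 : rel G G :=
  comp (comp L3 (prod_rel L1 Id)) (graph (fun g : G => (tt, g))).

Definition is_relational_symplectic_groupoid (S : SymplecticData G) : Prop :=
  weak_symplectic S /\
  imm_lag_G3 S L /\
  antisymplecto S I /\
  (forall x y z, L (x, y, z) -> L (y, z, x)) /\
  (forall x, I (I x) = x) /\
  rel_eq (comp I_rel L_rel)
                   (comp L_rel (comp (graph swap) (prod_rel I_rel I_rel))) /\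
  rel_eq (comp L3 (prod_rel L3 Id))
                   (comp (comp L3 (prod_rel Id L3)) (graph assoc)) /\
            imm_lag_rel31 S (comp L3 (prod_rel L3 Id)) /\
  imm_lag_G S (L1 tt) /\
  rel_eq (comp L3 (prod_rel L1 L1))
                   (comp L1 (fun (_ : unit * unit) (_ : unit) => True)) /\
  imm_lag_rel11 S L2.
End RSG.

(* Main.v *)
Require Import Defs.

Section Aux.
Variables (G : Type) (L : G * G * G -> Prop) (I : G -> G).
Hypothesis Hcyc : forall x y z, L (x, y, z) -> L (y, z, x).
Hypothesis Hinv : forall x, I (I x) = x.
Hypothesis Ha3 : rel_eq (comp (I_rel I) (L_rel L))
                   (comp (L_rel L) (comp (graph swap) (prod_rel (I_rel I) (I_rel I)))).
Hypothesis Ha4 : rel_eq (comp (L3 L I) (prod_rel (L3 L I) Id))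
                   (comp (comp (L3 L I) (prod_rel Id (L3 L I))) (graph assoc)).

Lemma a3 : forall x y z, L (x, y, z) -> L (I y, I x, I z).
Proof.
  intros x y z H.
  destruct (proj1 (Ha3 (x, y) (I z))) as [b [Hb1 Hb2]].
  - exists z; split; [exact H | reflexivity].
  - destruct Hb1 as [q [[Hq1 Hq2] Hq3]].
    unfold graph, swap in Hq3; subst b. simpl in *.
    unfold I_rel, graph in Hq1, Hq2.
    destruct q as [q1 q2]; simpl in *. subst q1 q2. exact Hb2.
Qed.

Definition M x y c := L (x, y, I c).

Lemma L3_iff : forall x y c, L3 L I (x, y) c <-> M x y c.
Proof.
  intros x y c; unfold L3, comp, L_rel, I_rel, graph, M; simpl; split.
  - intros [b [Hb Hc]]; subst c; rewrite Hinv; exact Hb.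
  - intros H; exists (I c); split; [exact H | now rewrite Hinv].
Qed.

Lemma assocLR : forall x y t z c, M x y t -> M t z c -> exists s, M y z s /\ M x s c.
Proof.
  intros x y t z c H1 H2.
  destruct (proj1 (Ha4 ((x, y), z) c)) as [p [Hp Hpc]].
  - exists (t, z). split.
    + split; simpl; [apply L3_iff; exact H1 | reflexivity].
    + apply L3_iff; exact H2.
  - unfold graph, assoc in Hp; simpl in Hp; subst p.
    destruct Hpc as [q [[Hq1 Hq2] Hq3]]. destruct q as [q1 q2]; simpl in *.
    unfold Id, graph in Hq1. subst q1.
    exists q2; split; apply L3_iff; assumption.
Qed.

Lemma assocRL : forall x y t z c, M y z t -> M x t c -> exists s, M x y s /\ M s z c.
Proof.
  intros x y t z c H1 H2.
  destruct (proj2 (Ha4 ((x, y), z) c)) as [p [Hp Hpc]].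
  - exists (x, (y, z)). split; [reflexivity|].
    exists (x, t). split.
    + split; simpl; [reflexivity | apply L3_iff; exact H1].
    + apply L3_iff; exact H2.
  - destruct p as [s z']. destruct Hp as [Hp1 Hp2]; simpl in *.
    unfold Id, graph in Hp2; subst z'.
    exists s; split; apply L3_iff; assumption.
Qed.

Lemma L2_iff : forall x y, L2 L I x y <->
  exists u, (exists w, L (w, I w, I u)) /\ L (u, x, I y).
Proof.
  intros x y; unfold L2, L1, L_I, comp, prod_rel, Id, graph; split.
  - intros [b [Hb [q [[[p [Hp1 Hp2]] Hq2] Hq3]]]]; subst b; simpl in *.
    exists (fst q); split.
    + destruct p as [w w']; simpl in Hp1; subst w'.
      exists w. apply (L3_iff w (I w) (fst q)); exact Hp2.
    + destruct q as [u x']; simpl in *; subst x'.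
      apply (L3_iff u x y); exact Hq3.
  - intros [u [[w Hw] Hu]]. exists (tt, x); split; [reflexivity|].
    exists (u, x); split; [split; simpl|].
    + exists (w, I w); split; [reflexivity|]. apply L3_iff; exact Hw.
    + reflexivity.
    + apply L3_iff; exact Hu.
Qed.

Lemma L2_sym : forall a y, L2 L I a y -> L2 L I y a.
Proof.
  intros a y H. apply L2_iff in H. destruct H as [u [[w Hw] Hu]].
  apply L2_iff. exists (I u); split.
  - exists w. pose proof (a3 _ _ _ Hw) as H. rewrite ?Hinv in H.
    rewrite Hinv. exact H.
  - pose proof (a3 _ _ _ Hu) as H. rewrite ?Hinv in H.
    apply Hcyc in H. exact H.
Qed.

Lemma L2_I : forall a y, L2 L I a y -> L2 L I (I a) (I y).
Proof.
  intros a y H. apply L2_iff in H. destruct H as [u [[w Hw] Hu]].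
  assert (H1 : M y (I a) u).
  { unfold M. pose proof (a3 _ _ _ Hu) as H. rewrite ?Hinv in H.
    do 2 apply Hcyc in H. exact H. }
  assert (H2 : M u w w).
  { unfold M. apply Hcyc in Hw. pose proof (a3 _ _ _ Hw) as H.
    rewrite ?Hinv in H. exact H. }
  destruct (assocLR _ _ _ _ _ H1 H2) as [s [Hs1 Hs2]].
  assert (H3 : M a s w).
  { unfold M in *. pose proof (a3 _ _ _ Hs1) as H. rewrite ?Hinv in H.
    apply Hcyc in H. exact H. }
  assert (H4 : M (I y) w s).
  { unfold M in *. pose proof (a3 _ _ _ Hs2) as H. rewrite ?Hinv in H.
    apply Hcyc in H. exact H. }
  destruct (assocRL _ _ _ _ _ H3 H4) as [v [Hv1 Hv2]].
  apply L2_iff. exists v; split.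
  - exists s. unfold M in Hv2. pose proof (a3 _ _ _ Hv2) as H.
    rewrite ?Hinv in H. apply Hcyc in H. apply Hcyc in H. exact H.
  - unfold M in Hv1. pose proof (a3 _ _ _ Hv1) as H. rewrite ?Hinv in H.
    apply Hcyc in H. apply Hcyc in H. rewrite Hinv. exact H.
Qed.
End Aux.

Theorem mainTheorem5 (G : Type) (S : SymplecticData G)
  (L : G * G * G -> Prop) (I : G -> G) :
  is_relational_symplectic_groupoid L I S ->
  rel_eq (comp (I_rel I) (L2 L I)) (comp (L2 L I) (I_rel I)) /\
  rel_eq (transpose (L2 L I)) (L2 L I).
Proof.
  intros [_ [_ [_ [Hcyc [Hinv [Ha3 [Ha4 _]]]]]]].
  split.
  - intros a c; unfold comp, I_rel, graph; split.
    + intros [b [Hb Hc]]; subst c. exists (I a); split; [reflexivity|].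
      apply (L2_I G L I Hcyc Hinv Ha3 Ha4); exact Hb.
    + intros [b [Hb Hc]]; subst b. exists (I c); split; [|now rewrite Hinv].
      pose proof (L2_I G L I Hcyc Hinv Ha3 Ha4 _ _ Hc) as H.
      rewrite Hinv in H; exact H.
  - intros a b; unfold transpose; split;
      apply (L2_sym G L I Hcyc Hinv Ha3).
Qed.
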